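(* Let $k\ge1$ and let $\Gamma\subset\mathbb{R}_+^k$ be a nonempty compact set. Let $\mu_n=(q_n,s_n,b_n)$, $n=1,2,\dots$, and $\mu=(q,s,b)$ be mechanisms in $\mathcal{M}_\Gamma$. If every $\mu_n$ is monotonic, $b_n$ converges pointwise to $b$ on $\mathbb{R}^k$, and $\mu$ is seller favorable, then $\mu$ is monotonic.
   Context: A $\Gamma$-mechanism consists of $q:\mathbb{R}_+^k\to\Gamma$ and $s:\mathbb{R}_+^k\to\mathbb{R}$; it is IC if $q(x)\cdot x-s(x)\ge q(y)\cdot x-s(y)$ for all $x,y\in\mathbb{R}_+^k$, IR if $q(x)\cdot x-s(x)\ge0$ for all $x\in\mathbb{R}_+^k$, and NPT if $s(x)\ge0$ for all $x\in\mathbb{R}_+^k$. $\mathcal{M}_\Gamma$ is the set of IC, IR and NPT $\Gamma$-mechanisms. The buyer payoff function is $b:\mathbb{R}^k\to\mathbb{R}$, $b(x):=\sup_{z\in\mathbb{R}_+^k}[q(z)\cdot x-s(z)]$; a mechanism is written $\mu=(q,s,b)$. For convex $f$, $f'(x;y):=\lim_{\delta\to0^+}(f(x+\delta y)-f(x))/\delta$. $\mu\in\mathcal{M}_\Gamma$ is seller favorable if $s(x)=b'(x;x)-b(x)$ for all $x\in\mathbb{R}_+^k$. A mechanism is monotonic if $s(y)\ge s(x)$ whenever $y\ge x$ (coordinatewise) in $\mathbb{R}_+^k$. *)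

(* Defs.v *)
From HB Require Import structures.
From mathcomp Require Import all_boot all_order all_algebra.
From mathcomp Require Import all_classical all_reals all_analysis.
Set Implicit Arguments. Unset Strict Implicit. Unset Printing Implicit Defensive.
Import Order.TTheory GRing.Theory Num.Theory.
Import numFieldNormedType.Exports.
Local Open Scope classical_set_scope.
Local Open Scope ring_scope.

Section Defs.
Variables (R : realType) (k : nat).
Notation vec := 'rV[R]_k.

Definition nonneg (x : vec) : Prop := forall i, 0 <= x ord0 i.

Definition vle (x y : vec) : Prop := forall i, x ord0 i <= y ord0 i.

Definition dot (u v : vec) : R := \sum_(i < k) u ord0 i * v ord0 i.

Definition buyer_payoff (q : vec -> vec) (s : vec -> R) (x : vec) : R :=
  sup [set dot (q z) x - s z | z in nonneg].

Definition Gamma_mechanism (Gamma : set vec) (q : vec -> vec) : Prop :=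
  forall x, nonneg x -> Gamma (q x).

Definition IC (q : vec -> vec) (s : vec -> R) : Prop :=
  forall x y, nonneg x -> nonneg y -> dot (q x) x - s x >= dot (q y) x - s y.

Definition IR (q : vec -> vec) (s : vec -> R) : Prop :=
  forall x, nonneg x -> dot (q x) x - s x >= 0.

Definition NPT (s : vec -> R) : Prop := forall x, nonneg x -> s x >= 0.

Definition in_M (Gamma : set vec) (q : vec -> vec) (s : vec -> R) : Prop :=
  [/\ Gamma_mechanism Gamma q, IC q s, IR q s & NPT s].

Definition dir_deriv (f : vec -> R) (x y : vec) : R :=
  lim ((fun d : R => (f (x + d *: y) - f x) / d) @ 0^'+).

Definition seller_favorable (q : vec -> vec) (s : vec -> R) : Prop :=
  forall x, nonneg x ->
    s x = dir_deriv (buyer_payoff q s) x x - buyer_payoff q s x.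

Definition monotonic (s : vec -> R) : Prop :=
  forall x y, nonneg x -> nonneg y -> vle x y -> s x <= s y.

End Defs.

(* Main.v *)
Require Import Defs.
From HB Require Import structures.
From mathcomp Require Import all_boot all_order all_algebra.
From mathcomp Require Import all_classical all_reals all_analysis.
From mathcomp Require Import ring lra.
Import Order.TTheory GRing.Theory Num.Theory.
Import numFieldNormedType.Exports.
Local Open Scope classical_set_scope.
Local Open Scope ring_scope.
Set Implicit Arguments. Unset Strict Implicit.

Section H.
Variables (R : realType) (k : nat).
Implicit Types (x y z a : 'rV[R]_k) (q : 'rV[R]_k -> 'rV[R]_k) (s : 'rV[R]_k -> R).

Lemma dotZr (u v : 'rV[R]_k) c : dot u (c *: v) = c * dot u v.
Proof. rewrite /dot mulr_sumr; apply: eq_bigr => i _; rewrite mxE mulrCA //. Qed.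

Lemma nonnegZ c x : 0 <= c -> nonneg x -> nonneg (c *: x).
Proof. by move=> c0 hx i; rewrite mxE mulr_ge0. Qed.

Lemma bp_eq q s a : IC q s -> nonneg a -> buyer_payoff q s a = dot (q a) a - s a.
Proof.
move=> hic ha; rewrite /buyer_payoff; apply/le_anti/andP; split.
- apply: ge_sup; first by exists (dot (q a) a - s a), a.
  by move=> _ [z hz <-]; apply: hic.
- have hub : has_ubound [set dot (q z) a - s z | z in nonneg (k:=k)].
    by exists (dot (q a) a - s a) => _ [z hz <-]; apply: hic.
  by apply: (ub_le_sup hub); exists a.
Qed.

Lemma bp_ge q s a z : IC q s -> nonneg a -> nonneg z ->
  dot (q z) a - s z <= buyer_payoff q s a.
Proof. by move=> hic ha hz; rewrite bp_eq //; apply: hic. Qed.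

Lemma keyK q s x y t u : IC q s -> monotonic s -> nonneg x -> nonneg y -> vle x y ->
  1 < t -> 1 < u ->
  (u - 1) * (buyer_payoff q s (t *: x) - t * buyer_payoff q s x) <=
  (t - 1) * (buyer_payoff q s ((u * t) *: y) - u * buyer_payoff q s (t *: y)).
Proof.
move=> hic hmon hx hy hxy t1 u1.
have t0 : 0 <= t by lra.
have u0 : 0 <= u * t by nra.
have htx := nonnegZ t0 hx; have hty := nonnegZ t0 hy.
have huty := nonnegZ u0 hy.
have e1 : buyer_payoff q s (t *: x) = t * dot (q (t *: x)) x - s (t *: x).
  by rewrite bp_eq // dotZr.
have e2 := bp_ge hic hx htx.
have e3 : buyer_payoff q s (t *: y) = t * dot (q (t *: y)) y - s (t *: y).
  by rewrite bp_eq // dotZr.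
have e4 := bp_ge hic huty hty; rewrite dotZr in e4.
have e5 : s (t *: x) <= s (t *: y).
  by apply: hmon => // i; rewrite !mxE ler_wpM2l.
have e6 : (t - 1) * s (t *: x) <= (t - 1) * s (t *: y) by rewrite ler_wpM2l // subr_ge0 ltW.
rewrite e1 e3.
have p1 : 0 <= (u - 1) * (buyer_payoff q s x - (dot (q (t *: x)) x - s (t *: x))) by apply: mulr_ge0; lra.
have p2 : 0 <= (u - 1) * ((t - 1) * s (t *: y) - (t - 1) * s (t *: x)) by apply: mulr_ge0; lra.
have p3 : 0 <= (t - 1) * (buyer_payoff q s ((u * t) *: y) - ((u * t) * dot (q (t *: y)) y - s (t *: y))) by apply: mulr_ge0; lra.
nra.
Qed.

Lemma lowb q s y t : IC q s -> nonneg y -> 0 <= t ->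
  t * buyer_payoff q s y + (t - 1) * s y <= buyer_payoff q s (t *: y).
Proof.
move=> hic hy t0; have := bp_ge hic (nonnegZ t0 hy) hy.
rewrite dotZr (bp_eq hic hy); lra.
Qed.

Definition Qf q s x := fun d : R => (buyer_payoff q s (x + d *: x) - buyer_payoff q s x) / d.

Lemma Qf_mono q s x d1 d2 : IC q s -> nonneg x -> 0 < d1 -> d1 <= d2 -> Qf q s x d1 <= Qf q s x d2.
Proof.
move=> hic hx d10 d12; rewrite /Qf.
have -> : x + d1 *: x = (1 + d1) *: x by rewrite scalerDl scale1r.
have -> : x + d2 *: x = (1 + d2) *: x by rewrite scalerDl scale1r.
have h1 : 0 <= 1 + d1 by lra.
have h2 : 0 <= 1 + d2 by lra.
have hz1 := nonnegZ h1 hx; have hz2 := nonnegZ h2 hx.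
have e1 : buyer_payoff q s ((1 + d1) *: x) = (1 + d1) * dot (q ((1 + d1) *: x)) x - s ((1 + d1) *: x).
  by rewrite bp_eq // dotZr.
have e2 := bp_ge hic hx hz1.
have e3 := bp_ge hic hz2 hz1; rewrite dotZr in e3.
have d20 : 0 < d2 by lra.
rewrite ler_pdivrMr // mulrAC ler_pdivlMr //.
rewrite e1.
have p1 : 0 <= (d2 - d1) * (buyer_payoff q s x - (dot (q ((1 + d1) *: x)) x - s ((1 + d1) *: x))).
  by apply: mulr_ge0; lra.
have p2 : 0 <= d1 * (buyer_payoff q s ((1 + d2) *: x) - ((1 + d2) * dot (q ((1 + d1) *: x)) x - s ((1 + d1) *: x))).
  by apply: mulr_ge0; lra.
nra.
Qed.

Lemma Qf_lb q s x d : IC q s -> nonneg x -> 0 < d -> dot (q x) x <= Qf q s x d.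
Proof.
move=> hic hx d0; rewrite /Qf.
have -> : x + d *: x = (1 + d) *: x by rewrite scalerDl scale1r.
have h1 : 0 <= 1 + d by lra.
have := bp_ge hic (nonnegZ h1 hx) hx; rewrite dotZr (bp_eq hic hx) => h.
rewrite ler_pdivlMr //; nra.
Qed.

Lemma Qf_cvg q s x : IC q s -> nonneg x -> cvg (Qf q s x @ 0^'+).
Proof.
move=> hic hx; apply: nondecreasing_at_right_is_cvgr.
- near=> b => a c; rewrite !in_itv /= => /andP[a0 _] /andP[c0 _] ac.
  exact: Qf_mono.
- near=> b; exists (dot (q x) x) => w [e he <-]; move: he; rewrite /= in_itv /= => /andP[e0 _].
  exact: Qf_lb.
Unshelve. all: by end_near.
Qed.

Lemma Qf_lim_le q s x d : IC q s -> nonneg x -> 0 < d -> lim (Qf q s x @ 0^'+) <= Qf q s x d.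
Proof.
move=> hic hx d0; apply: limr_le; first exact: Qf_cvg.
near=> e; apply: Qf_mono => //.
by near: e; exact: nbhs_right_le.
Unshelve. all: by end_near.
Qed.

End H.
Theorem proposition5 (R : realType) (k : nat) (hk : (1 <= k)%N)
  (Gamma : set 'rV[R]_k) (hGne : Gamma !=set0) (hGsub : Gamma `<=` nonneg (k:=k))
  (hGc : compact Gamma)
  (qn : nat -> 'rV[R]_k -> 'rV[R]_k) (sn : nat -> 'rV[R]_k -> R)
  (q : 'rV[R]_k -> 'rV[R]_k) (s : 'rV[R]_k -> R) :
  (forall n, in_M Gamma (qn n) (sn n)) ->
  in_M Gamma q s ->
  (forall n, monotonic (sn n)) ->
  (forall x : 'rV[R]_k,
     (fun n => buyer_payoff (qn n) (sn n) x) @ \oo --> buyer_payoff q s x) ->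
  seller_favorable q s ->
  monotonic s.
Proof.
move=> hn [_ hic _ _] hmon hconv hsf x y hx hy hxy.
have hicn n : IC (qn n) (sn n) by case: (hn n).
have dir z : nonneg z -> s z = lim (Qf q s z @ 0^'+) - buyer_payoff q s z.
  by move=> hz; rewrite (hsf z hz).
set b := buyer_payoff q s.
have main d : 0 < d -> s x + s y <= 2 * (Qf q s y d - b y).
  move=> d0.
  set e := d / (2 + d).
  set u := 1 + d / 2.
  have e0 : 0 < e by rewrite /e divr_gt0 //; lra.
  have hue : u * e = d / 2 by rewrite /u /e; field; lra.
  have hut : u * (1 + e) = 1 + d by rewrite /u /e; field; lra.
  have t1 : 1 < 1 + e by lra.
  have u1 : 1 < u by rewrite /u; lra.
  have LIM : (u - 1) * (b ((1 + e) *: x) - (1 + e) * b x) <=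
      (1 + e - 1) * (b ((u * (1 + e)) *: y) - u * b ((1 + e) *: y)).
    rewrite -subr_ge0.
    apply: (cvgr_to_ge (F := \oo) (f := fun n =>
      (1 + e - 1) * (buyer_payoff (qn n) (sn n) ((u * (1 + e)) *: y) - u * buyer_payoff (qn n) (sn n) ((1 + e) *: y))
      - (u - 1) * (buyer_payoff (qn n) (sn n) ((1 + e) *: x) - (1 + e) * buyer_payoff (qn n) (sn n) x))).
      apply: cvgB; apply: cvgM; try exact: cvg_cst; apply: cvgB; try exact: hconv;
        apply: cvgM; try exact: cvg_cst; exact: hconv.
    by near=> n; rewrite subr_ge0; apply: keyK.
  have qx := Qf_lim_le hic hx e0.
  have F2 : b ((1 + e) *: x) = b x + e * Qf q s x e.
    by rewrite /Qf /b mulrC divfK ?gt_eqF // scalerDl scale1r; rewrite /b; ring.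
  have F3 : b ((u * (1 + e)) *: y) = b y + d * Qf q s y d.
    by rewrite hut /Qf /b mulrC divfK ?gt_eqF // scalerDl scale1r; rewrite /b; ring.
  have F4 := lowb hic hy (ltW (lt_trans ltr01 t1)).
  rewrite F2 F3 in LIM.
  have hsx := dir x hx; have hsy := dir y hy.
  rewrite -/b in F4 hsx hsy.
  set Qx := Qf q s x e in F2 LIM qx; set Qy := Qf q s y d in F3 LIM *.
  set B4 := b ((1 + e) *: y) in F4 LIM.
  have A : (u - 1) * (Qx - b x) <= b y + d * Qy - u * B4.
    rewrite -(ler_pM2l e0); move: LIM.
    have -> : 1 + e - 1 = e by ring.
    by move=> LIM; apply: le_trans LIM; rewrite le_eqVlt; apply/orP; left; apply/eqP; ring.
  have B : u * ((1 + e) * b y + (1 + e - 1) * s y) <= u * B4 by rewrite ler_pM2l //; lra.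
  have B' : u * ((1 + e) * b y + (1 + e - 1) * s y) = (1 + d) * b y + d / 2 * s y.
    by rewrite mulrDr mulrA hut; congr (_ + _); rewrite -hue mulrA; congr (_ * _ * _); ring.
  have hu1 : u - 1 = d / 2 by rewrite /u; ring.
  have d2 : 0 < d / 2 by lra.
  have C : d / 2 * (Qx - b x) <= d / 2 * (2 * (Qy - b y) - s y).
    rewrite -hu1; apply: (le_trans A); rewrite hu1; lra.
  rewrite ler_pM2l // in C.
  lra.
have Ly : (s x + s y) / 2 + b y <= lim (Qf q s y @ 0^'+).
  apply: limr_ge; first exact: Qf_cvg.
  near=> d; have d0 : 0 < d by near: d; exact: nbhs_right_gt.
  have := main d d0; lra.
have := dir y hy; rewrite -/b; lra.
Unshelve. all: by end_near.
Qed.
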